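(* Let $f_1,\dots,f_n\colon\mathbb R\to\mathbb R$ and $\eta\colon\mathbb R\times\mathbb R\to(0,\infty)$ be smooth with $\eta(x,0)=1$, and consider the metric $(\star)$ on $\mathbb R^{n+2}$, with scalar curvature $\mathrm{Scal}(x,u)=-2\eta_{uu}/\eta$. Let $k_\gamma(x)=-\eta_u(x,0)$. If $\mathrm{Scal}<0$ everywhere and there is $\varepsilon>0$ such that $|k_\gamma(x)|\le(1-\varepsilon)\sqrt{\tfrac12|\mathrm{Scal}(x,u)|}$ for all $x,u$, then the metric is complete.
   Context: The metric $(\star)$: on $\mathbb R\times\mathbb R^{n+1}$ with coordinates $(x,u,v_1,\dots,v_n)$, conventions $v_0=u$, $v_{-1}=v_{n+1}=0$, $f_0=f_{n+1}=0$, $g_{\eta,f}=\eta(x,u)^2dx^2+\sum_{j=0}^n\big(dv_j+(v_{j-1}f_j(x)-v_{j+1}f_{j+1}(x))dx\big)^2$. $k_\gamma$ is the geodesic curvature of $\gamma(x)=(x,0,\dots,0)$. *)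

(* Defs.v *)
From Stdlib Require Import Reals Lra.
From Coquelicot Require Import Coquelicot.
Open Scope R_scope.

Definition smooth1 (f : R -> R) : Prop :=
  forall (k : nat) (x : R), ex_derive_n f k x.

Definition pdx (g : R -> R -> R) : R -> R -> R :=
  fun x u => Derive (fun s => g s u) x.
Definition pdu (g : R -> R -> R) : R -> R -> R :=
  fun x u => Derive (fun s => g x s) u.

Fixpoint C2 (k : nat) (g : R -> R -> R) : Prop :=
  (forall x u, continuity_2d_pt g x u) /\
  match k with
  | O => True
  | S k' => (forall x u, ex_derive (fun s => g s u) x /\ ex_derive (fun s => g x s) u)
            /\ C2 k' (pdx g) /\ C2 k' (pdu g)
  end.

Definition smooth2 (g : R -> R -> R) : Prop := forall k, C2 k g.

(* A point of R^{n+2} is p : nat -> R with p 0 = x, p (S j) = v_j (j = 0..n),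
   v_0 = u; coordinates of index > n+1 are ignored. *)

(* f_j with the conventions f_0 = f_{n+1} = 0 *)
Definition fconv (n : nat) (f : nat -> R -> R) (j : nat) (x : R) : R :=
  if andb (Nat.leb 1 j) (Nat.leb j n) then f j x else 0.

(* v_j with the conventions v_{-1} = v_{n+1} = 0; vprev j = v_{j-1}, vnext j = v_{j+1} *)
Definition vprev (p : nat -> R) (j : nat) : R :=
  match j with O => 0 | S j' => p j end.           (* v_{j-1} = p (S (j-1)) = p j *)
Definition vnext (n : nat) (p : nat -> R) (j : nat) : R :=
  if Nat.leb (S j) n then p (S (S j)) else 0.        (* v_{j+1} = p (j+2) *)

Definition gform (n : nat) (eta : R -> R -> R) (f : nat -> R -> R)
    (p w : nat -> R) : R :=
  (eta (p O) (p 1%nat)) ^ 2 * (w O) ^ 2 +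
  sum_f_R0 (fun j => (w (S j) +
      (vprev p j * fconv n f j (p O) - vnext n p j * fconv n f (S j) (p O)) * w O) ^ 2) n.

Definition C1_curve (n : nat) (c : R -> nat -> R) : Prop :=
  forall i, (i <= S n)%nat ->
    (forall t, ex_derive (fun s => c s i) t) /\
    (forall t, continuous (Derive (fun s => c s i)) t).

Definition velocity (c : R -> nat -> R) (t : R) : nat -> R :=
  fun i => Derive (fun s => c s i) t.

Definition glength (n : nat) (eta : R -> R -> R) (f : nat -> R -> R)
    (c : R -> nat -> R) : R :=
  RInt (fun t => sqrt (gform n eta f (c t) (velocity c t))) 0 1.

Definition joins (n : nat) (c : R -> nat -> R) (p q : nat -> R) : Prop :=
  forall i, (i <= S n)%nat -> c 0 i = p i /\ c 1 i = q i.

(* Riemannian distance d(p,q) < eps, unfolded: some C^1 curve from p to q has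
   length < eps. *)
Definition dist_lt (n : nat) (eta : R -> R -> R) (f : nat -> R -> R)
    (p q : nat -> R) (eps : R) : Prop :=
  exists c, C1_curve n c /\ joins n c p q /\ glength n eta f c < eps.

Definition metric_complete (n : nat) (eta : R -> R -> R) (f : nat -> R -> R) : Prop :=
  forall s : nat -> (nat -> R),
    (forall eps, 0 < eps -> exists N, forall m k, (N <= m)%nat -> (N <= k)%nat ->
        dist_lt n eta f (s m) (s k) eps) ->
    exists q, forall eps, 0 < eps -> exists N, forall k, (N <= k)%nat ->
        dist_lt n eta f (s k) q eps.

Definition Scal (eta : R -> R -> R) (x u : R) : R :=
  -2 * pdu (pdu eta) x u / eta x u.
Definition kgamma (eta : R -> R -> R) (x : R) : R := - pdu eta x 0.

(* Main.v *)
Require Import Defs.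
From Stdlib Require Import Reals Lra Lia Psatz.
From Coquelicot Require Import Coquelicot.
Open Scope R_scope.

Lemma mono0 (F dF : R -> R) :
  (forall x, 0 <= x -> is_derive F x (dF x)) ->
  (forall x, 0 <= x -> 0 <= dF x) -> forall u, 0 <= u -> F 0 <= F u.
Proof.
intros HD Hp u Hu.
destruct (Req_dec u 0) as [->|Hn]; [lra|].
destruct (MVT_gen F 0 u dF) as [c [Hc E]].
- intros x Hx. apply HD. unfold Rmin in Hx; destruct Rle_dec; lra.
- intros x Hx. apply derivable_continuous_pt. exists (dF x). apply is_derive_Reals, HD. unfold Rmin in Hx; destruct Rle_dec; lra.
- assert (0 <= c). { unfold Rmin in Hc; destruct Rle_dec; lra. }
  specialize (Hp c H). nra.
Qed.

Lemma h_lb (h h1 h2 : R -> R) (a e : R) :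
  0 <= a -> 0 < e <= 1/2 ->
  (forall u, is_derive h u (h1 u)) -> (forall u, is_derive h1 u (h2 u)) ->
  (forall u, a ^ 2 * h u <= h2 u) -> h 0 = 1 -> - h1 0 <= (1 - e) * a ->
  forall u, 0 <= u -> e / 2 <= h u.
Proof.
intros Ha He D1 D2 Hh2 H0 Hk1.
assert (G : forall u, 0 <= u -> e * a <= exp (- a * u) * (h1 u + a * h u)).
{ intros u Hu.
  pose proof (mono0 (fun u => exp (- a * u) * (h1 u + a * h u))
     (fun u => exp (- a * u) * (h2 u - a ^ 2 * h u))) as M.
  simpl in M. rewrite Rmult_0_r, exp_0, H0 in M.
  assert (e * a <= 1 * (h1 0 + a * 1)) by lra.
  eapply Rle_trans; [exact H|]. apply M; auto.
  - intros x _. auto_derive.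
    + repeat split; try (eexists; apply D1); try (eexists; apply D2).
    + replace (Derive (fun y : R => h1 y) x) with (h2 x) by (symmetry; apply is_derive_unique, D2).
      replace (Derive (fun y : R => h y) x) with (h1 x) by (symmetry; apply is_derive_unique, D1). ring.
  - intros x _. apply Rmult_le_pos. apply Rlt_le, exp_pos. specialize (Hh2 x). lra. }
assert (K : forall u, 0 <= u -> 1 - e / 2 <= exp (a * u) * h u - e / 2 * exp (2 * a * u)).
{ intros u Hu.
  pose proof (mono0 (fun u => exp (a * u) * h u - e / 2 * exp (2 * a * u))
     (fun u => exp (a * u) * (h1 u + a * h u) - e * a * exp (2 * a * u))) as M.
  simpl in M. rewrite !Rmult_0_r, exp_0, H0 in M.
  assert (1 - e/2 = 1 * 1 - e / 2 * 1) as -> by ring.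
  apply M; auto.
  - intros x _. auto_derive.
    + repeat split; try (eexists; apply D1); try (eexists; apply D2).
    + replace (Derive (fun y : R => h y) x) with (h1 x) by (symmetry; apply is_derive_unique, D1). field.
  - intros x Hx. specialize (G x Hx).
    assert (exp (2 * a * x) = exp (a * x) * exp (a * x)) as ->.
    { rewrite <- exp_plus. f_equal; ring. }
    assert (exp (a * x) * exp (- a * x) = 1).
    { rewrite <- exp_plus. replace (a * x + - a * x) with 0 by ring. apply exp_0. }
    pose proof (exp_pos (a * x)).
    assert (h1 x + a * h x = exp (a * x) * (exp (- a * x) * (h1 x + a * h x))) as ->.
    { rewrite <- Rmult_assoc, H. ring. }
    set (E := exp (a * x)) in *. set (Z := exp (- a * x) * (h1 x + a * h x)) in *.
    assert (0 <= E * (Z - e * a)) by (apply Rmult_le_pos; lra). nra. }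
intros u Hu. specialize (K u Hu).
assert (E1 : 1 <= exp (a * u)).
{ pose proof (exp_ineq1_le (a * u)). nra. }
assert (exp (2 * a * u) = exp (a * u) * exp (a * u)) as E2.
{ rewrite <- exp_plus. f_equal; ring. }
rewrite E2 in K. set (E := exp (a * u)) in *.
assert (0 < E * (h u - e / 2 * E)) by nra.
assert (0 < h u - e / 2 * E).
{ destruct (Rlt_or_le 0 (h u - e / 2 * E)); auto. nra. }
nra.
Qed.

Lemma is_derive_negc (g dg : R -> R) :
  (forall u, is_derive g u (dg u)) -> forall v, is_derive (fun s => g (- s)) v (- dg (- v)).
Proof.
intros D v.
replace (- dg (- v)) with (scal (-1) (dg (- v))) by (unfold scal; simpl; unfold mult; simpl; ring).
apply (is_derive_comp g (fun s => - s)). apply D.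
auto_derive; auto; ring.
Qed.

Lemma is_derive_negc2 (g dg : R -> R) :
  (forall u, is_derive g u (dg u)) -> forall v, is_derive (fun s => - g (- s)) v (dg (- v)).
Proof.
intros D v. pose proof (is_derive_opp _ _ _ (is_derive_negc g dg D v)) as H.
unfold opp in H; simpl in H. rewrite Ropp_involutive in H. exact H.
Qed.

Lemma eta_lb (eta : R -> R -> R) :
  smooth2 eta -> (forall x u, 0 < eta x u) -> (forall x, eta x 0 = 1) ->
  (forall x u, Scal eta x u < 0) ->
  (exists eps, 0 < eps /\ forall x u,
      Rabs (kgamma eta x) <= (1 - eps) * sqrt (/ 2 * Rabs (Scal eta x u))) ->
  exists m, 0 < m /\ forall x u, m <= eta x u.
Proof.
intros Hs Hpos H0 HS [eps [Heps Hk]].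
set (e := Rmin eps (1/2)).
assert (He : 0 < e <= 1/2) by (unfold e, Rmin; destruct Rle_dec; lra).
assert (Hee : e <= eps) by (unfold e, Rmin; destruct Rle_dec; lra).
exists (e / 2). split; [lra|]. intros x.
destruct (Hs 2%nat) as [_ [D1 [_ [_ [D2 _]]]]].
set (k := kgamma eta x). set (a := Rabs k / (1 - e)).
assert (Ha : 0 <= a) by (unfold a; apply Rmult_le_pos; [apply Rabs_pos|apply Rlt_le, Rinv_0_lt_compat; lra]).
assert (Hka : Rabs k = (1 - e) * a) by (unfold a; field; lra).
assert (Hh2 : forall u, a ^ 2 * eta x u <= pdu (pdu eta) x u).
{ intros u. specialize (Hk x u). specialize (HS x u). specialize (Hpos x u).
  fold k in Hk. unfold Scal in *.
  set (q := pdu (pdu eta) x u) in *.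
  assert (Hq : 0 < q).
  { assert (-2 * q / eta x u = (-2 * q) * / eta x u) by reflexivity.
    pose proof (Rinv_0_lt_compat _ Hpos). nra. }
  assert (/ 2 * Rabs (-2 * q / eta x u) = q / eta x u).
  { rewrite Rabs_left. field. lra. unfold Rdiv. 
    pose proof (Rinv_0_lt_compat _ Hpos). nra. }
  rewrite H in Hk.
  assert (Hqe : 0 <= q / eta x u) by (apply Rlt_le, Rdiv_lt_0_compat; lra).
  assert (a <= sqrt (q / eta x u)).
  { pose proof (sqrt_pos (q / eta x u)).
    assert ((1 - e) * a <= (1 - e) * sqrt (q / eta x u)).
    { rewrite <- Hka. eapply Rle_trans; [exact Hk|]. apply Rmult_le_compat_r; lra. }
    apply Rmult_le_reg_l with (1 - e); lra. }
  assert (a ^ 2 <= q / eta x u).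
  { rewrite <- (sqrt_sqrt (q / eta x u)) by lra. simpl. rewrite Rmult_1_r.
    apply Rmult_le_compat; lra. }
  assert (a ^ 2 * eta x u <= q / eta x u * eta x u) by (apply Rmult_le_compat_r; lra).
  replace (q / eta x u * eta x u) with q in H3 by (field; lra). exact H3. }
assert (Dh : forall u, is_derive (fun s => eta x s) u (pdu eta x u)).
{ intros u. apply Derive_correct. apply (proj2 (D1 x u)). }
assert (Dh1 : forall u, is_derive (fun s => pdu eta x s) u (pdu (pdu eta) x u)).
{ intros u. apply Derive_correct. apply (proj2 (D2 x u)). }
intros u. destruct (Rle_or_lt 0 u) as [Hu|Hu].
- apply (h_lb (fun s => eta x s) (pdu eta x) (pdu (pdu eta) x) a e); auto.
  + assert (- pdu eta x 0 = k) as -> by reflexivity.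
    rewrite <- Hka. apply Rle_abs.
- replace u with (- (- u)) by ring.
  apply (h_lb (fun s => eta x (- s)) (fun s => - pdu eta x (- s)) (fun s => pdu (pdu eta) x (- s)) a e); auto; try lra.
  + apply (is_derive_negc (fun s => eta x s)). apply Dh.
  + apply (is_derive_negc2 (fun s => pdu eta x s)). apply Dh1.
  + simpl. rewrite Ropp_0. apply H0.
  + rewrite Ropp_0, Ropp_involutive. assert (pdu eta x 0 = - k) as -> by (unfold k, kgamma; ring).
    rewrite <- Hka. rewrite <- Rabs_Ropp. apply Rle_abs.
Qed.

Lemma cR_plus (f g : R -> R) t : continuous f t -> continuous g t -> continuous (fun s => f s + g s) t.
Proof. intros. apply (continuous_plus f g); auto. Qed.
Lemma cR_mult (f g : R -> R) t : continuous f t -> continuous g t -> continuous (fun s => f s * g s) t.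
Proof. intros. apply (continuous_mult f g); auto. Qed.
Lemma cR_opp (f : R -> R) t : continuous f t -> continuous (fun s => - f s) t.
Proof. intros. apply (continuous_opp f); auto. Qed.
Lemma cR_minus (f g : R -> R) t : continuous f t -> continuous g t -> continuous (fun s => f s - g s) t.
Proof. intros. apply cR_plus; auto. apply cR_opp; auto. Qed.
Lemma cR_const (a t : R) : continuous (fun _ => a) t.
Proof. apply continuous_const. Qed.
Lemma cR_id (t : R) : continuous (fun s => s) t.
Proof. apply continuous_id. Qed.
Lemma cR_pow2 (f : R -> R) t : continuous f t -> continuous (fun s => f s ^ 2) t.
Proof. intros. simpl. apply cR_mult; auto. apply cR_mult; auto. apply cR_const. Qed.
Lemma cR_sqrt (f : R -> R) t : continuous f t -> continuous (fun s => sqrt (f s)) t.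
Proof. intros. apply (continuous_comp f sqrt); auto. apply continuous_sqrt. Qed.
Lemma cR_abs (f : R -> R) t : continuous f t -> continuous (fun s => Rabs (f s)) t.
Proof. intros. apply (continuous_comp f Rabs); auto. apply continuous_Rabs. Qed.
Lemma cR_2d (g : R -> R -> R) (a b : R -> R) t :
  (forall x u, continuity_2d_pt g x u) -> continuous a t -> continuous b t ->
  continuous (fun s => g (a s) (b s)) t.
Proof.
intros Hg Ha Hb. apply (continuous_comp_2 a b g); auto.
apply continuity_2d_pt_filterlim. apply Hg.
Qed.
Lemma cR_sum (F : nat -> R -> R) N t :
  (forall j, (j <= N)%nat -> continuous (F j) t) ->
  continuous (fun s => sum_f_R0 (fun j => F j s) N) t.
Proof.
induction N; intros H; simpl.
- apply H; lia.
- apply cR_plus. apply IHN; intros; apply H; lia. apply H; lia.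
Qed.

Lemma f_cont n (f : nat -> R -> R) :
  (forall j, (1 <= j <= n)%nat -> smooth1 (f j)) ->
  forall j x, continuous (fconv n f j) x.
Proof.
intros Hf j x. unfold fconv.
destruct (andb (Nat.leb 1 j) (Nat.leb j n)) eqn:E.
- apply Bool.andb_true_iff in E. destruct E as [E1 E2].
  apply Nat.leb_le in E1, E2.
  apply (@ex_derive_continuous R_AbsRing R_NormedModule). exact (Hf j (conj E1 E2) 1%nat x).
- apply cR_const.
Qed.

Lemma f_cont_comp n (f : nat -> R -> R) (a : R -> R) j t :
  (forall j, (1 <= j <= n)%nat -> smooth1 (f j)) -> continuous a t ->
  continuous (fun s => fconv n f j (a s)) t.
Proof.
intros Hf Ha. apply (continuous_comp a (fconv n f j)); auto. apply f_cont; auto.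
Qed.

Lemma gform_cont n eta f (p w : R -> nat -> R) t :
  (forall j, (1 <= j <= n)%nat -> smooth1 (f j)) ->
  (forall x u, continuity_2d_pt eta x u) ->
  (forall i, (i <= S n)%nat -> continuous (fun s => p s i) t) ->
  (forall i, (i <= S n)%nat -> continuous (fun s => w s i) t) ->
  continuous (fun s => gform n eta f (p s) (w s)) t.
Proof.
intros Hf He Hp Hw. unfold gform.
apply cR_plus.
- apply cR_mult. apply cR_pow2. apply cR_2d; auto; apply Hp; lia.
  apply cR_pow2; apply Hw; lia.
- apply (cR_sum (fun j s => (w s (S j) + (vprev (p s) j * fconv n f j (p s O) -
      vnext n (p s) j * fconv n f (S j) (p s O)) * w s O) ^ 2)).
  intros j Hj. apply cR_pow2. apply cR_plus. apply Hw; lia.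
  apply cR_mult; [|apply Hw; lia].
  apply cR_minus; apply cR_mult.
  + unfold vprev. destruct j. apply cR_const. apply Hp; lia.
  + apply f_cont_comp; auto. apply Hp; lia.
  + unfold vnext. destruct (Nat.leb (S j) n) eqn:E. apply Nat.leb_le in E. apply Hp; lia. apply cR_const.
  + apply f_cont_comp; auto. apply Hp; lia.
Qed.

Lemma exR (f : R -> R) a b : (forall z, continuous f z) -> ex_RInt f a b.
Proof. intros H. apply (@ex_RInt_continuous R_CompleteNormedModule). intros; apply H. Qed.

Lemma int_bound (phi dphi G : R -> R) K t :
  0 <= t <= 1 -> 0 <= K ->
  (forall s, is_derive phi s (dphi s)) -> (forall s, continuous dphi s) ->
  (forall s, continuous G s) -> (forall s, 0 <= G s) ->
  (forall s, 0 < s < t -> Rabs (dphi s) <= K * G s) ->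
  Rabs (phi t - phi 0) <= K * RInt G 0 1.
Proof.
intros Ht HK Hd Hc HG HG0 Hb.
assert (E : RInt dphi 0 t = phi t - phi 0).
{ apply is_RInt_unique. apply (is_RInt_derive phi dphi); intros; auto. }
rewrite <- E.
assert (IG : forall a b, ex_RInt G a b) by (intros; apply exR; auto).
eapply Rle_trans. apply abs_RInt_le. lra. apply exR; auto.
eapply Rle_trans. apply RInt_le with (g := fun s => K * G s). lra.
apply exR; intros; apply cR_abs; auto.
apply exR; intros; apply cR_mult; auto; apply cR_const.
exact Hb.
assert (RInt (fun s => K * G s) 0 t = K * RInt G 0 t) as ->.
{ apply (RInt_scal G 0 t K). apply IG. }
apply Rmult_le_compat_l; auto.
rewrite <- (RInt_Chasles G 0 t 1) by auto.
assert (0 <= RInt G t 1) by (apply RInt_ge_0; auto; lra).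
unfold plus; simpl. lra.
Qed.

Lemma sum_nonneg (F : nat -> R) N : (forall j, (j <= N)%nat -> 0 <= F j) -> 0 <= sum_f_R0 F N.
Proof.
induction N; intros H; simpl. apply H; lia.
assert (0 <= F (S N)) by (apply H; lia). assert (0 <= sum_f_R0 F N) by (apply IHN; intros; apply H; lia). lra.
Qed.

Lemma sum_term_le (F : nat -> R) N i : (forall j, (j <= N)%nat -> 0 <= F j) -> (i <= N)%nat -> F i <= sum_f_R0 F N.
Proof.
induction N; intros H Hi; simpl.
- replace i with 0%nat by lia. lra.
- destruct (Nat.eq_dec i (S N)) as [->|Hn].
  + assert (0 <= sum_f_R0 F N) by (apply sum_nonneg; intros; apply H; lia). lra.
  + assert (F i <= sum_f_R0 F N) by (apply IHN; [intros; apply H; lia|lia]).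
    assert (0 <= F (S N)) by (apply H; lia). lra.
Qed.

Lemma sum_telescope (T : nat -> R) N : sum_f_R0 (fun j => T j - T (S j)) N = T 0%nat - T (S N).
Proof. induction N. simpl; ring. rewrite !tech5, IHN. ring. Qed.

Lemma sum_ext (F G : nat -> R) N : (forall j, (j <= N)%nat -> F j = G j) -> sum_f_R0 F N = sum_f_R0 G N.
Proof.
induction N; intros H; simpl. apply H; lia. rewrite IHN by (intros; apply H; lia). rewrite H by lia. reflexivity.
Qed.

Lemma sum_quad (a b : nat -> R) l N :
  sum_f_R0 (fun j => (l * a j - b j) ^ 2) N =
  l ^ 2 * sum_f_R0 (fun j => a j ^ 2) N - 2 * l * sum_f_R0 (fun j => a j * b j) N
  + sum_f_R0 (fun j => b j ^ 2) N.
Proof. induction N. simpl; ring. rewrite !tech5, IHN. ring. Qed.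

Lemma cauchy_schwarz (a b : nat -> R) N :
  (sum_f_R0 (fun j => a j * b j) N) ^ 2 <=
  sum_f_R0 (fun j => a j ^ 2) N * sum_f_R0 (fun j => b j ^ 2) N.
Proof.
set (A := sum_f_R0 (fun j => a j ^ 2) N).
set (B := sum_f_R0 (fun j => a j * b j) N).
set (C := sum_f_R0 (fun j => b j ^ 2) N).
assert (Q : forall l, 0 <= l ^ 2 * A - 2 * l * B + C).
{ intros l. unfold A, B, C. pose proof (sum_quad a b l N) as E.
  assert (0 <= sum_f_R0 (fun j => (l * a j - b j) ^ 2) N) by (apply sum_nonneg; intros; apply pow2_ge_0). lra. }
assert (HA : 0 <= A) by (apply sum_nonneg; intros; apply pow2_ge_0).
destruct (Rle_lt_or_eq_dec 0 A HA) as [HA'|HA'].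
- specialize (Q (B / A)).
  assert ((B / A) ^ 2 * A - 2 * (B / A) * B + C = C - B ^ 2 / A) by (field; lra).
  rewrite H in Q.
  assert (B ^ 2 / A * A <= C * A) by (apply Rmult_le_compat_r; lra).
  replace (B ^ 2 / A * A) with (B ^ 2) in H0 by (field; lra). lra.
- rewrite <- HA' in Q. rewrite <- HA'.
  destruct (Req_dec B 0) as [HB|HB]. rewrite HB. lra.
  specialize (Q ((C + 1) / (2 * B))).
  replace (((C + 1) / (2 * B)) ^ 2 * 0 - 2 * ((C + 1) / (2 * B)) * B + C) with (-1) in Q by (field; auto).
  lra.
Qed.

Lemma abs_le_sqrt (x y : R) : 0 <= y -> x ^ 2 <= y -> Rabs x <= sqrt y.
Proof.
intros Hy H. rewrite <- sqrt_Rsqr_abs. apply sqrt_le_1_alt. rewrite <- Rsqr_pow2 in H. exact H.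
Qed.

Definition bco n f (p : nat -> R) j :=
  vprev p j * fconv n f j (p O) - vnext n p j * fconv n f (S j) (p O).
Definition aco n f (p w : nat -> R) j := w (S j) + bco n f p j * w O.

Lemma gform_eq n eta f p w :
  gform n eta f p w = (eta (p O) (p 1%nat)) ^ 2 * (w O) ^ 2 + sum_f_R0 (fun j => aco n f p w j ^ 2) n.
Proof. reflexivity. Qed.

Lemma sumsq_nonneg (a : nat -> R) N : 0 <= sum_f_R0 (fun j => a j ^ 2) N.
Proof. apply sum_nonneg. intros; apply pow2_ge_0. Qed.

Lemma gform_nonneg n eta f p w : 0 <= gform n eta f p w.
Proof. rewrite gform_eq. pose proof (sumsq_nonneg (aco n f p w) n). pose proof (pow2_ge_0 (eta (p O) (p 1%nat))).
 pose proof (pow2_ge_0 (w O)). nra. Qed.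

Lemma gform_w0 n eta f p w m : 0 < m -> m <= eta (p O) (p 1%nat) ->
  m * Rabs (w O) <= sqrt (gform n eta f p w).
Proof.
intros Hm He. rewrite <- (Rabs_pos_eq m) by lra. rewrite <- Rabs_mult.
apply abs_le_sqrt. apply gform_nonneg. rewrite gform_eq.
pose proof (sumsq_nonneg (aco n f p w) n).
assert (m ^ 2 <= eta (p O) (p 1%nat) ^ 2) by (simpl; nra).
pose proof (pow2_ge_0 (w O)). rewrite Rpow_mult_distr. nra.
Qed.

Lemma gform_a n eta f p w j : (j <= n)%nat -> Rabs (aco n f p w j) <= sqrt (gform n eta f p w).
Proof.
intros Hj. apply abs_le_sqrt. apply gform_nonneg. rewrite gform_eq.
pose proof (sum_term_le (fun j => aco n f p w j ^ 2) n j ltac:(intros; apply pow2_ge_0) Hj).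
cbv beta in H. pose proof (pow2_ge_0 (eta (p O) (p 1%nat))). pose proof (pow2_ge_0 (w O)). nra.
Qed.

Lemma fconv_Sn n f x : fconv n f (S n) x = 0.
Proof. unfold fconv. replace (Nat.leb (S n) n) with false by (symmetry; apply Nat.leb_gt; lia).
  rewrite Bool.andb_false_r. reflexivity. Qed.

Lemma vb_zero n f p : sum_f_R0 (fun j => p (S j) * bco n f p j) n = 0.
Proof.
set (T := fun j => vprev p j * p (S j) * fconv n f j (p O)).
rewrite (sum_ext _ (fun j => T j - T (S j))).
- rewrite sum_telescope. unfold T. rewrite fconv_Sn. simpl. ring.
- intros j Hj. unfold T, bco. unfold vnext.
  destruct (Nat.leb (S j) n) eqn:E.
  + change (vprev p (S j)) with (p (S j)). ring.
  + apply Nat.leb_gt in E. assert (j = n) by lia. subst j.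
    rewrite !fconv_Sn. ring.
Qed.

Lemma Phi_bound n eta f p w :
  Rabs (sum_f_R0 (fun j => p (S j) * w (S j)) n) <=
  sqrt (1 + sum_f_R0 (fun j => p (S j) ^ 2) n) * sqrt (gform n eta f p w).
Proof.
assert (E : sum_f_R0 (fun j => p (S j) * w (S j)) n =
   sum_f_R0 (fun j => p (S j) * aco n f p w j) n - w O * sum_f_R0 (fun j => p (S j) * bco n f p j) n).
{ unfold aco. generalize n at 1 3 5. intro N. induction N. simpl; ring. rewrite !tech5, IHN. ring. }
rewrite E, vb_zero, Rmult_0_r, Rminus_0_r.
pose proof (cauchy_schwarz (fun j => p (S j)) (aco n f p w) n) as CS.
set (A := sum_f_R0 (fun j => p (S j) ^ 2) n) in *.
set (C := sum_f_R0 (fun j => aco n f p w j ^ 2) n) in *.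
assert (HA : 0 <= A) by apply sumsq_nonneg.
assert (HC : 0 <= C) by apply sumsq_nonneg.
assert (HCg : C <= gform n eta f p w).
{ rewrite gform_eq. fold C. pose proof (pow2_ge_0 (eta (p O) (p 1%nat))). pose proof (pow2_ge_0 (w O)). nra. }
eapply Rle_trans. apply (abs_le_sqrt _ (A * C)). apply Rmult_le_pos; assumption. exact CS.
rewrite sqrt_mult by lra.
apply Rmult_le_compat; try apply sqrt_pos; apply sqrt_le_1_alt; lra.
Qed.

Lemma wS_bound n eta f p w m B j : (j <= n)%nat -> 0 < m -> m <= eta (p O) (p 1%nat) ->
  Rabs (bco n f p j) <= B ->
  Rabs (w (S j)) <= (1 + B / m) * sqrt (gform n eta f p w).
Proof.
intros Hj Hm He Hb.
pose proof (gform_a n eta f p w j Hj) as Ha.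
pose proof (gform_w0 n eta f p w m Hm He) as H0.
assert (w (S j) = aco n f p w j - bco n f p j * w O) as -> by (unfold aco; ring).
set (g := sqrt (gform n eta f p w)) in *.
assert (Rabs (bco n f p j * w O) <= B / m * g).
{ rewrite Rabs_mult. assert (0 <= Rabs (w O)) by apply Rabs_pos.
  assert (Rabs (w O) <= g / m) by (apply Rmult_le_reg_l with m; [lra|]; unfold Rdiv; field_simplify; lra).
  assert (0 <= Rabs (bco n f p j)) by apply Rabs_pos.
  replace (B / m * g) with (B * (g / m)) by (field; lra). apply Rmult_le_compat; auto. }
eapply Rle_trans. apply Rabs_triang. rewrite Rabs_Ropp. lra.
Qed.

Lemma fconv_bound n f x Fb : 0 <= Fb -> (forall j, (1 <= j <= n)%nat -> Rabs (f j x) <= Fb) ->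
  forall i, Rabs (fconv n f i x) <= Fb.
Proof.
intros HF H i. unfold fconv. destruct (andb (Nat.leb 1 i) (Nat.leb i n)) eqn:E.
- apply Bool.andb_true_iff in E. destruct E as [E1 E2]. apply Nat.leb_le in E1, E2. apply H; lia.
- rewrite Rabs_R0. exact HF.
Qed.

Lemma bco_bound n f p j V Fb : (j <= n)%nat -> 0 <= V -> 0 <= Fb ->
  (forall i, (i <= n)%nat -> Rabs (p (S i)) <= V) ->
  (forall i, Rabs (fconv n f i (p O)) <= Fb) -> Rabs (bco n f p j) <= 2 * V * Fb.
Proof.
intros Hj HV HF Hp Hf. unfold bco.
assert (H1 : Rabs (vprev p j) <= V).
{ unfold vprev. destruct j. rewrite Rabs_R0; lra. apply Hp. lia. }
assert (H2 : Rabs (vnext n p j) <= V).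
{ unfold vnext. destruct (Nat.leb (S j) n) eqn:E. apply Nat.leb_le in E. apply Hp; lia. rewrite Rabs_R0; lra. }
pose proof (Hf j). pose proof (Hf (S j)).
eapply Rle_trans. unfold Rminus. apply Rabs_triang. rewrite Rabs_Ropp. rewrite !Rabs_mult.
pose proof (Rabs_pos (vprev p j)). pose proof (Rabs_pos (vnext n p j)).
pose proof (Rabs_pos (fconv n f j (p O))). pose proof (Rabs_pos (fconv n f (S j) (p O))).
assert (Rabs (vprev p j) * Rabs (fconv n f j (p O)) <= V * Fb) by (apply Rmult_le_compat; auto).
assert (Rabs (vnext n p j) * Rabs (fconv n f (S j) (p O)) <= V * Fb) by (apply Rmult_le_compat; auto).
lra.
Qed.

Lemma sum_le_const (F : nat -> R) N M : (forall j, (j <= N)%nat -> F j <= M) -> sum_f_R0 F N <= (INR N + 1) * M.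
Proof.
induction N; intros H. simpl. assert (F 0%nat <= M) by (apply H; lia). lra.
rewrite tech5, S_INR. assert (sum_f_R0 F N <= (INR N + 1) * M) by (apply IHN; intros; apply H; lia).
assert (F (S N) <= M) by (apply H; lia). lra.
Qed.

Lemma sq_le (x y : R) : Rabs x <= y -> x ^ 2 <= y ^ 2.
Proof. intros H. pose proof (Rabs_pos x). rewrite <- (pow2_abs x). apply pow_incr. lra. Qed.

Lemma gform_upper n eta f p w E D B :
  Rabs (eta (p O) (p 1%nat)) <= E -> (forall i, (i <= S n)%nat -> Rabs (w i) <= D) ->
  (forall j, (j <= n)%nat -> Rabs (bco n f p j) <= B) -> 0 <= B ->
  gform n eta f p w <= (E ^ 2 + (INR n + 1) * (1 + B) ^ 2) * D ^ 2.
Proof.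
intros HE HD HB HB0. rewrite gform_eq.
assert (H0 : Rabs (w O) <= D) by (apply HD; lia).
assert (HD0 : 0 <= D) by (pose proof (Rabs_pos (w O)); lra).
assert (eta (p O) (p 1%nat) ^ 2 * w O ^ 2 <= E ^ 2 * D ^ 2).
{ apply Rmult_le_compat; try apply pow2_ge_0; apply sq_le; auto. }
assert (sum_f_R0 (fun j => aco n f p w j ^ 2) n <= (INR n + 1) * ((1 + B) * D) ^ 2).
{ apply sum_le_const. intros j Hj. apply sq_le. unfold aco.
  eapply Rle_trans. apply Rabs_triang. rewrite Rabs_mult.
  assert (Rabs (w (S j)) <= D) by (apply HD; lia).
  assert (Rabs (bco n f p j) * Rabs (w O) <= B * D) by (apply Rmult_le_compat; auto; apply Rabs_pos).
  lra. }
rewrite Rpow_mult_distr in H1. nra.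
Qed.

Definition Phi n (p : nat -> R) := sqrt (1 + sum_f_R0 (fun j => p (S j) ^ 2) n).

Lemma Phi_pos n p : 1 <= Phi n p.
Proof.
unfold Phi. apply Rle_trans with (sqrt 1). rewrite sqrt_1; lra. apply sqrt_le_1_alt. pose proof (sumsq_nonneg (fun j => p (S j)) n). lra.
Qed.

Lemma Phi_coord n p i : (i <= n)%nat -> Rabs (p (S i)) <= Phi n p.
Proof.
intros Hi. unfold Phi. apply abs_le_sqrt. pose proof (sumsq_nonneg (fun j => p (S j)) n). lra.
pose proof (sum_term_le (fun j => p (S j) ^ 2) n i ltac:(intros; apply pow2_ge_0) Hi). cbv beta in H. lra.
Qed.

Lemma Phi_ext n p q : (forall i, (i <= S n)%nat -> p i = q i) -> Phi n p = Phi n q.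
Proof.
intros H. unfold Phi. f_equal. f_equal. apply sum_ext. intros j Hj. rewrite H by lia. reflexivity.
Qed.

Lemma sum_scal_l k (F : nat -> R) N : sum_f_R0 (fun j => k * F j) N = k * sum_f_R0 F N.
Proof. induction N. simpl; ring. rewrite !tech5, IHN. ring. Qed.

Lemma is_derive_sumf (F dF : nat -> R -> R) N t :
  (forall j, (j <= N)%nat -> is_derive (F j) t (dF j t)) ->
  is_derive (fun s => sum_f_R0 (fun j => F j s) N) t (sum_f_R0 (fun j => dF j t) N).
Proof.
induction N; intros H; simpl.
- apply H; lia.
- apply (is_derive_plus (fun s => sum_f_R0 (fun j => F j s) N) (F (S N))).
  apply IHN; intros; apply H; lia. apply H; lia.
Qed.

Section Curve.
Variables (n : nat) (f : nat -> R -> R) (eta : R -> R -> R) (m : R).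
Hypothesis Hf : forall j, (1 <= j <= n)%nat -> smooth1 (f j).
Hypothesis He : forall x u, continuity_2d_pt eta x u.
Hypothesis Hm : 0 < m.
Hypothesis Hlb : forall x u, m <= eta x u.

Variable c : R -> nat -> R.
Hypothesis Hc : C1_curve n c.

Let G := fun s => sqrt (gform n eta f (c s) (velocity c s)).

Lemma G_cont : forall t, continuous G t.
Proof.
intros t. apply cR_sqrt. apply gform_cont; auto.
- intros i Hi. apply (@ex_derive_continuous R_AbsRing R_NormedModule). apply (proj1 (Hc i Hi)).
- intros i Hi. apply (proj2 (Hc i Hi)).
Qed.

Lemma G_nonneg : forall s, 0 <= G s.
Proof. intros; apply sqrt_pos. Qed.

Lemma c_deriv i : (i <= S n)%nat -> forall s, is_derive (fun s => c s i) s (velocity c s i).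
Proof. intros Hi s. apply Derive_correct. apply (proj1 (Hc i Hi)). Qed.

Lemma curve_x t : 0 <= t <= 1 -> Rabs (c t O - c 0 O) <= / m * glength n eta f c.
Proof.
intros Ht. apply (int_bound (fun s => c s O) (fun s => velocity c s O) G); auto.
- apply Rlt_le, Rinv_0_lt_compat; auto.
- apply c_deriv; lia.
- intros s. apply (proj2 (Hc O ltac:(lia))).
- apply G_cont.
- apply G_nonneg.
- intros s _. unfold G. pose proof (gform_w0 n eta f (c s) (velocity c s) m Hm (Hlb _ _)).
  apply Rmult_le_reg_l with m; auto. rewrite <- Rmult_assoc, Rinv_r, Rmult_1_l by lra. exact H.
Qed.

Lemma curve_Phi t : 0 <= t <= 1 -> Rabs (Phi n (c t) - Phi n (c 0)) <= 1 * glength n eta f c.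
Proof.
intros Ht.
set (S0 := fun s => sum_f_R0 (fun j => c s (S j) ^ 2) n).
set (dS := fun s => sum_f_R0 (fun j => 2 * (c s (S j) * velocity c s (S j))) n).
apply (int_bound (fun s => Phi n (c s)) (fun s => dS s / (2 * Phi n (c s))) G); auto; try lra.
- intros s. unfold Phi.
  apply (is_derive_sqrt (fun s => 1 + S0 s)).
  + rewrite <- (Rplus_0_l (dS s)). apply (is_derive_plus (fun _ => 1) S0 s 0 (dS s)).
    * auto_derive; auto.
    * unfold S0, dS. apply (is_derive_sumf (fun j s => c s (S j) ^ 2) (fun j s => 2 * (c s (S j) * velocity c s (S j)))).
      intros j Hj. 
      pose proof (is_derive_pow (fun s => c s (S j)) 2 s _ (c_deriv (S j) ltac:(lia) s)) as Hp.
      cbv beta. replace (2 * (c s (S j) * velocity c s (S j))) with (INR 2 * velocity c s (S j) * c s (S j) ^ Init.Nat.pred 2) by (simpl; ring). exact Hp.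

  + pose proof (sumsq_nonneg (fun j => c s (S j)) n). unfold S0. lra.
- intros s. 
  assert (Hcs : forall i, (i <= S n)%nat -> continuous (fun s => c s i) s).
  { intros i Hi. apply (@ex_derive_continuous R_AbsRing R_NormedModule). apply (proj1 (Hc i Hi)). }
  apply cR_mult.
  + unfold dS. apply (cR_sum (fun j s => 2 * (c s (S j) * velocity c s (S j)))).
    intros j Hj. apply cR_mult. apply cR_const. apply cR_mult. apply Hcs; lia. apply (proj2 (Hc (S j) ltac:(lia))).
  + apply continuity_pt_filterlim. apply (continuity_pt_inv (fun s => 2 * Phi n (c s))).
    * apply continuity_pt_filterlim. apply cR_mult. apply cR_const. unfold Phi. apply cR_sqrt.
      apply cR_plus. apply cR_const. apply (cR_sum (fun j s => c s (S j) ^ 2)). intros j Hj.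
      apply cR_pow2. apply Hcs; lia.
    * pose proof (Phi_pos n (c s)). lra.
- apply G_cont.
- apply G_nonneg.
- intros s _. unfold G.
  pose proof (Phi_bound n eta f (c s) (velocity c s)) as HB.
  pose proof (Phi_pos n (c s)) as HP. unfold Phi in HP.
  assert (dS s / (2 * Phi n (c s)) = sum_f_R0 (fun j => c s (S j) * velocity c s (S j)) n / Phi n (c s)) as ->.
  { unfold dS. rewrite (sum_scal_l 2 (fun j => c s (S j) * velocity c s (S j))). unfold Phi. field. lra. }
  unfold Rdiv. rewrite Rabs_mult, Rabs_inv, (Rabs_pos_eq (Phi n (c s))) by (pose proof (Phi_pos n (c s)); lra).
  apply Rmult_le_reg_r with (Phi n (c s)). unfold Phi; lra.
  rewrite Rmult_assoc, Rinv_l by (unfold Phi; lra). unfold Phi. lra.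
Qed.

Lemma curve_coord X V Fb : 0 <= V -> 0 <= Fb ->
  (forall j x, (1 <= j <= n)%nat -> Rabs x <= X -> Rabs (f j x) <= Fb) ->
  (forall s, 0 < s < 1 -> Rabs (c s O) <= X /\ Phi n (c s) <= V) ->
  forall i, (i <= S n)%nat ->
  Rabs (c 1 i - c 0 i) <= (/ m + 1 + 2 * V * Fb / m) * glength n eta f c.
Proof.
intros HV HF Hfb Hreg i Hi.
assert (Hm' : 0 < / m) by (apply Rinv_0_lt_compat; auto).
assert (HB : 0 <= 2 * V * Fb / m) by (unfold Rdiv; repeat apply Rmult_le_pos; lra).
apply (int_bound (fun s => c s i) (fun s => velocity c s i) G); auto; try lra.
- apply c_deriv; auto.
- intros s. apply (proj2 (Hc i Hi)).
- apply G_cont.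
- apply G_nonneg.
- intros s Hs. destruct (Hreg s Hs) as [HX HP].
  pose proof (G_nonneg s) as HG. unfold G in *.
  destruct i as [|j].
  + pose proof (gform_w0 n eta f (c s) (velocity c s) m Hm (Hlb _ _)).
    assert (Rabs (velocity c s O) <= / m * sqrt (gform n eta f (c s) (velocity c s))).
    { apply Rmult_le_reg_l with m; auto. rewrite <- Rmult_assoc, Rinv_r, Rmult_1_l by lra. exact H. }
    nra.
  + assert (Hb : Rabs (bco n f (c s) j) <= 2 * V * Fb).
    { apply bco_bound; [lia|auto|auto| |].
      - intros i' Hi'. eapply Rle_trans; [apply (Phi_coord n); exact Hi'|exact HP].
      - apply fconv_bound; auto. }
    pose proof (wS_bound n eta f (c s) (velocity c s) m (2 * V * Fb) j ltac:(lia) Hm (Hlb _ _) Hb).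
    nra.
Qed.

End Curve.

Lemma fbound n (f : nat -> R -> R) :
  (forall j, (1 <= j <= n)%nat -> smooth1 (f j)) ->
  forall X, exists Fb, 0 <= Fb /\ forall j x, (1 <= j <= n)%nat -> Rabs x <= X -> Rabs (f j x) <= Fb.
Proof.
intros Hf X.
assert (forall N, exists Fb, 0 <= Fb /\ forall j x, (1 <= j <= N)%nat -> (j <= n)%nat -> Rabs x <= X -> Rabs (f j x) <= Fb).
{ induction N.
  - exists 0. split. lra. intros; lia.
  - destruct IHN as [Fb [HF H]].
    destruct (Compare_dec.le_lt_dec (S N) n) as [HN|HN].
    + assert (Hc : forall x, continuity_pt (fun x => Rabs (f (S N) x)) x).
      { intros x. apply continuity_pt_filterlim. apply cR_abs.
        apply (@ex_derive_continuous R_AbsRing R_NormedModule). exact (Hf (S N) ltac:(lia) 1%nat x). }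
      destruct (continuity_ab_maj (fun x => Rabs (f (S N) x)) (- Rabs X) (Rabs X)) as [Mx [HM _]].
      { pose proof (Rabs_pos X). lra. }
      { intros; apply Hc. }
      exists (Fb + Rabs (f (S N) Mx)). split. pose proof (Rabs_pos (f (S N) Mx)). lra.
      intros j x Hj Hjn Hx. destruct (Nat.eq_dec j (S N)) as [->|Hne].
      * assert (Rabs (f (S N) x) <= Rabs (f (S N) Mx)).
        { apply HM. pose proof (Rle_abs X). pose proof (Rabs_pos x). split.
          - destruct (Rle_or_lt 0 x). pose proof (Rabs_pos X). lra. rewrite Rabs_left in Hx by lra.
            rewrite Rabs_pos_eq by lra. lra.
          - pose proof (Rle_abs x). lra. }
        lra.
      * pose proof (H j x ltac:(lia) Hjn Hx). pose proof (Rabs_pos (f (S N) Mx)). lra.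
    + exists Fb. split; auto. intros j x Hj Hjn Hx. apply H; auto. lia. }
destruct (H n) as [Fb [HF HH]]. exists Fb. split; auto. intros j x Hj Hx. apply HH; auto. lia.
Qed.

Definition seg (a b : nat -> R) : R -> nat -> R := fun t i => a i + t * (b i - a i).

Lemma seg_vel a b t i : velocity (seg a b) t i = b i - a i.
Proof.
unfold velocity, seg. apply is_derive_unique. auto_derive; auto. ring.
Qed.

Lemma seg_C1 n a b : C1_curve n (seg a b).
Proof.
intros i _. split.
- intros t. unfold seg. auto_derive; auto.
- intros t. apply (continuous_ext (fun _ => b i - a i)). intros x. symmetry. apply (seg_vel a b x i).
  apply cR_const.
Qed.

Lemma glength_nonneg n eta f c (Hf : forall j, (1 <= j <= n)%nat -> smooth1 (f j))
  (He : forall x u, continuity_2d_pt eta x u) : C1_curve n c -> 0 <= glength n eta f c.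
Proof.
intros Hc. unfold glength. apply RInt_ge_0. lra.
apply exR. intros. apply (G_cont n f eta Hf He c Hc).
intros. apply sqrt_pos.
Qed.

Lemma lim_sum0 (u : nat -> nat -> R) N :
  (forall i, (i <= N)%nat -> is_lim_seq (fun k => u k i) 0) ->
  is_lim_seq (fun k => sum_f_R0 (fun i => u k i) N) 0.
Proof.
induction N; intros H; simpl.
- apply H; lia.
- replace (Finite 0) with (Finite (0 + 0)) by (f_equal; ring).
  apply is_lim_seq_plus'. apply IHN; intros; apply H; lia. apply H; lia.
Qed.

Theorem proposition3p4 (n : nat) (f : nat -> R -> R) (eta : R -> R -> R) :
  (forall j, (1 <= j <= n)%nat -> smooth1 (f j)) ->
  smooth2 eta ->
  (forall x u, 0 < eta x u) ->
  (forall x, eta x 0 = 1) ->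
  (forall x u, Scal eta x u < 0) ->
  (exists eps, 0 < eps /\ forall x u,
      Rabs (kgamma eta x) <= (1 - eps) * sqrt (/ 2 * Rabs (Scal eta x u))) ->
  metric_complete n eta f.
Proof.
intros Hf Hs Hpos H0 HS Hk.
destruct (eta_lb eta Hs Hpos H0 HS Hk) as [m [Hm Hlb]].
assert (He : forall x u, continuity_2d_pt eta x u) by exact (proj1 (Hs 0%nat)).
assert (Hm' : 0 < / m) by (apply Rinv_0_lt_compat; auto).
intros s Hcau.
destruct (Hcau 1 Rlt_0_1) as [N1 HN1].
assert (Hstay : forall c, C1_curve n c -> glength n eta f c < 1 -> forall t, 0 <= t <= 1 ->
   Rabs (c t O) <= Rabs (c 0 O) + / m /\ Phi n (c t) <= Phi n (c 0) + 1).
{ intros c Hc HL t Ht.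
  pose proof (curve_x n f eta m Hf He Hm Hlb c Hc t Ht).
  pose proof (curve_Phi n f eta Hf He c Hc t Ht).
  assert (/ m * glength n eta f c <= / m * 1) by (apply Rmult_le_compat_l; lra).
  split.
  - pose proof (Rabs_triang_inv (c t O) (c 0 O)). lra.
  - pose proof (Rle_abs (Phi n (c t) - Phi n (c 0))). lra. }
assert (Hreg : forall k, (N1 <= k)%nat -> Rabs (s k O) <= Rabs (s N1 O) + / m /\ Phi n (s k) <= Phi n (s N1) + 1).
{ intros k Hk1. destruct (HN1 N1 k (Nat.le_refl _) Hk1) as [c [Hc [Hj HL]]].
  destruct (Hstay c Hc HL 1 ltac:(lra)) as [A1 A2].
  rewrite (proj1 (Hj O ltac:(lia))), (proj2 (Hj O ltac:(lia))) in A1.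
  rewrite (Phi_ext n (c 1) (s k)), (Phi_ext n (c 0) (s N1)) in A2 by (intros; apply Hj; auto).
  auto. }
set (X := Rabs (s N1 O) + 2 * / m).
set (V := Phi n (s N1) + 2).
assert (HV : 0 <= V) by (unfold V; pose proof (Phi_pos n (s N1)); lra).
destruct (fbound n f Hf X) as [Fb [HFb HFb']].
set (K := / m + 1 + 2 * V * Fb / m).
assert (HK : 0 < K) by (unfold K; assert (0 <= 2 * V * Fb / m) by (unfold Rdiv; repeat apply Rmult_le_pos; lra); lra).
assert (Hcoord : forall i, (i <= S n)%nat -> exists l : R, is_lim_seq (fun k => s k i) l).
{ intros i Hi.
  assert (ex_lim_seq_cauchy (fun k => s k i)).
  { intros eps.
    set (d := Rmin 1 (eps / (K + 1))).
    assert (Hd : 0 < d) by (unfold d, Rmin; destruct Rle_dec; [lra|]; apply Rdiv_lt_0_compat; [apply cond_pos|lra]).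
    assert (Hd1 : d <= 1) by (unfold d; apply Rmin_l).
    assert (Hd2 : d <= eps / (K + 1)) by (unfold d; apply Rmin_r).
    destruct (Hcau d Hd) as [N2 HN2].
    exists (Nat.max N1 N2). intros a b Ha Hb.
    destruct (HN2 a b ltac:(lia) ltac:(lia)) as [c [Hc [Hj HL]]].
    pose proof (glength_nonneg n eta f c Hf He Hc) as HL0.
    assert (Hcc : Rabs (c 1 i - c 0 i) <= K * glength n eta f c).
    { apply (curve_coord n f eta m Hf He Hm Hlb c Hc X V Fb HV HFb HFb'); auto.
      intros t Ht. destruct (Hstay c Hc ltac:(lra) t ltac:(lra)) as [A1 A2].
      destruct (Hreg a ltac:(lia)) as [B1 B2].
      rewrite (proj1 (Hj O ltac:(lia))) in A1.
      rewrite (Phi_ext n (c 0) (s a)) in A2 by (intros; apply Hj; auto).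
      unfold X, V. split; lra. }
    rewrite (proj1 (Hj i Hi)), (proj2 (Hj i Hi)) in Hcc.
    rewrite Rabs_minus_sym.
    assert (K * glength n eta f c < K * d) by (apply Rmult_lt_compat_l; lra).
    assert (K * d <= K * (eps / (K + 1))) by (apply Rmult_le_compat_l; lra).
    assert (K * (eps / (K + 1)) < eps).
    { pose proof (cond_pos eps). apply Rmult_lt_reg_r with (K + 1). lra.
      replace (K * (eps / (K + 1)) * (K + 1)) with (K * eps) by (field; lra). nra. }
    lra. }
  apply ex_lim_seq_cauchy_corr in H. destruct H as [l Hl]. exists l. exact Hl. }
set (q := fun i => real (Lim_seq (fun k => s k i))).
assert (Hq : forall i, (i <= S n)%nat -> is_lim_seq (fun k => s k i) (q i)).
{ intros i Hi. destruct (Hcoord i Hi) as [l Hl]. unfold q. rewrite (is_lim_seq_unique _ _ Hl). exact Hl. }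
exists q. intros eps Heps.
set (D := fun k => sum_f_R0 (fun i => Rabs (s k i - q i)) (S n)).
assert (HD : is_lim_seq D 0).
{ unfold D. apply (lim_sum0 (fun k i => Rabs (s k i - q i))). intros i Hi.
  replace (Finite 0) with (Rbar_abs (Finite (q i - q i))) by (simpl; f_equal; rewrite Rminus_diag; apply Rabs_R0).
  apply (is_lim_seq_abs (fun k => s k i - q i)). apply is_lim_seq_minus'. apply Hq; auto. apply is_lim_seq_const. }
destruct (He (q O) (q 1%nat) (mkposreal 1 Rlt_0_1)) as [de Hde].
destruct (fbound n f Hf (Rabs (q O) + 1)) as [Fb2 [HFb2 HFb2']].
set (Qv := sum_f_R0 (fun i => Rabs (q i)) (S n)).
assert (HQv : forall i, (i <= S n)%nat -> Rabs (q i) <= Qv).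
{ intros i Hi. apply (sum_term_le (fun i => Rabs (q i))); auto. intros; apply Rabs_pos. }
assert (HQv0 : 0 <= Qv) by (pose proof (HQv O ltac:(lia)); pose proof (Rabs_pos (q O)); lra).
set (B := 2 * (Qv + 1) * Fb2).
assert (HB : 0 <= B) by (unfold B; repeat apply Rmult_le_pos; lra).
set (E := Rabs (eta (q O) (q 1%nat)) + 1).
set (C := E ^ 2 + (INR n + 1) * (1 + B) ^ 2).
assert (HC : 0 <= C) by (unfold C; pose proof (pos_INR n); pose proof (pow2_ge_0 E); pose proof (pow2_ge_0 (1 + B)); nra).
set (r := Rmin 1 (Rmin de (eps / (sqrt C + 1)))).
assert (Hsc : 0 <= sqrt C) by apply sqrt_pos.
assert (Hr : 0 < r).
{ unfold r. apply Rmin_glb_lt. lra. apply Rmin_glb_lt. apply cond_pos. apply Rdiv_lt_0_compat; lra. }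
assert (Hr1 : r <= 1) by apply Rmin_l.
assert (Hr2 : r <= de) by (unfold r; eapply Rle_trans; [apply Rmin_r|apply Rmin_l]).
assert (Hr3 : r <= eps / (sqrt C + 1)) by (unfold r; eapply Rle_trans; [apply Rmin_r|apply Rmin_r]).
apply is_lim_seq_spec in HD. destruct (HD (mkposreal r Hr)) as [N HN].
exists N. intros k HkN. specialize (HN k HkN). simpl in HN. rewrite Rminus_0_r in HN.
assert (HD0 : 0 <= D k) by (apply sum_nonneg; intros; apply Rabs_pos).
rewrite Rabs_pos_eq in HN by auto.
assert (Hdi : forall i, (i <= S n)%nat -> Rabs (s k i - q i) <= D k).
{ intros i Hi. apply (sum_term_le (fun i => Rabs (s k i - q i))); auto. intros; apply Rabs_pos. }
set (c := seg (s k) q).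
assert (Hct : forall t i, 0 <= t <= 1 -> (i <= S n)%nat -> Rabs (c t i - q i) <= D k).
{ intros t i Ht Hi. unfold c, seg.
  replace (s k i + t * (q i - s k i) - q i) with ((1 - t) * (s k i - q i)) by ring.
  rewrite Rabs_mult, Rabs_pos_eq by lra. pose proof (Hdi i Hi). pose proof (Rabs_pos (s k i - q i)). nra. }
exists c. split; [apply seg_C1|split].
- intros i Hi. unfold c, seg. split; ring.
- assert (Hbound : forall t, 0 < t < 1 -> sqrt (gform n eta f (c t) (velocity c t)) <= sqrt C * D k).
  { intros t Ht.
    rewrite <- (sqrt_pow2 (D k)) by auto. rewrite <- sqrt_mult by (auto; apply pow2_ge_0).
    apply sqrt_le_1_alt.
    apply gform_upper; auto.
    + assert (H1 := Hct t O ltac:(lra) ltac:(lia)). assert (H2 := Hct t 1%nat ltac:(lra) ltac:(lia)).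
      specialize (Hde (c t O) (c t 1%nat) ltac:(lra) ltac:(lra)). simpl in Hde.
      unfold E. pose proof (Rabs_triang_inv (eta (c t O) (c t 1%nat)) (eta (q O) (q 1%nat))). lra.
    + intros i Hi. unfold c. rewrite seg_vel. rewrite Rabs_minus_sym. apply Hdi; auto.
    + intros j Hj. apply bco_bound; [lia|lra|lra| |].
      * intros i Hi. pose proof (Hct t (S i) ltac:(lra) ltac:(lia)). pose proof (HQv (S i) ltac:(lia)).
        pose proof (Rabs_triang_inv (c t (S i)) (q (S i))). lra.
      * apply fconv_bound; auto. intros j' Hj'. apply HFb2'; auto.
        pose proof (Hct t O ltac:(lra) ltac:(lia)). pose proof (Rabs_triang_inv (c t O) (q O)). lra. }
  unfold glength.
  eapply Rle_lt_trans.
  { apply RInt_le with (g := fun _ => sqrt C * D k). lra.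
    apply exR. intros. apply (G_cont n f eta Hf He c (seg_C1 n (s k) q)).
    apply exR. intros. apply cR_const.
    exact Hbound. }
  rewrite RInt_const. unfold scal; simpl; unfold mult; simpl.
  rewrite Rminus_0_r, Rmult_1_l.
  assert (sqrt C * D k <= sqrt C * (eps / (sqrt C + 1))) by (apply Rmult_le_compat_l; lra).
  assert (sqrt C * (eps / (sqrt C + 1)) < eps).
  { apply Rmult_lt_reg_r with (sqrt C + 1). lra.
    replace (sqrt C * (eps / (sqrt C + 1)) * (sqrt C + 1)) with (sqrt C * eps) by (field; lra). nra. }
  lra.
Qed.
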